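(* Under the standing setup below, let $\boldsymbol\beta,\boldsymbol\nu\in(0,\infty)^N$. Then any globally optimal solution $(\mathbf p^\#,\mathbf B^\#)$ of Problem $\mathbb P_3(\boldsymbol\beta,\boldsymbol\nu)$ can be given by $$B_n^\#=\mathcal B_n(\lambda^\#),\qquad p_n^\#=\frac{\sigma_n^2 B_n^\#\,\psi_n(\lambda^\#)}{g_n}\qquad(n\in\mathcal N),$$ where $\lambda^\#>0$ is a solution of $\sum_{n\in\mathcal N}\mathcal B_n(\lambda)=B_{total}$, and for $\lambda\ge 0$: $$\psi_n(\lambda)=\exp\Big\{1+W\Big(\tfrac1e\big(\tfrac{g_n\lambda}{\nu_n\beta_n\sigma_n^2}-1\big)\Big)\Big\}-1,\qquad \mathcal B_n(\lambda)=\frac{\max\{\gamma_n(\lambda),\,r_n^{\min}\}}{\log_2(1+\psi_n(\lambda))},$$ $$\gamma_n(\lambda)=\begin{cases} r_{n,e}+\xi, & \text{if there is } \xi\ge0 \text{ with } f_n'(\xi)=\dfrac{\beta_n\sigma_n^2(1+\psi_n(\lambda))\ln 2}{c_n g_n},\\ r_{n,e}, & \text{otherwise.}\end{cases}$$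
   Context: Standing setup: $N\ge1$ users, $\mathcal N=\{1,\dots,N\}$, total bandwidth $B_{total}>0$. For each $n$: constants $g_n>0$, $\sigma_n^2>0$, $p_n^{cir}>0$, weight $c_n>0$, $r_{n,e}\ge 0$, $r_n^{\min}>0$ with $r_n^{\min}\ge r_{n,e}$. Rate $r_n(p,B)=B\log_2\!\big(1+\frac{g_n p}{\sigma_n^2 B}\big)$ ($p\ge0$, $B>0$), secrecy rate $r_{n,s}(p,B)=r_n(p,B)-r_{n,e}$. Utility $f_n:(0,\infty)\to\mathbb R$ is twice differentiable with $f_n'>0$, $f_n''\le 0$ on $(0,\infty)$; $f_n(0)$, $f_n'(0)$ are defined as the corresponding limits at $0^+$ when finite. $F_n(p,B)=c_n f_n(r_{n,s}(p,B))$. Problem $\mathbb P_3(\boldsymbol\beta,\boldsymbol\nu)$: maximize $\sum_n \nu_n\big(F_n(p_n,B_n)-\beta_n(p_n+p_n^{cir})\big)$ over $(\mathbf p,\mathbf B)$ with $p_n\ge0,B_n>0$ subject to $\sum_n B_n\le B_{total}$ and $r_n(p_n,B_n)\ge r_n^{\min}$ for all $n$. $W$ denotes the principal branch of the Lambert $W$ function: for $z\ge -e^{-1}$, $W(z)$ is the solution $x\ge-1$ of $xe^x=z$. *)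

(* Defs.v *)
From Stdlib Require Import Reals Lra List ClassicalEpsilon.
From Coquelicot Require Import Coquelicot.
Open Scope R_scope.

(* Users are indexed 0..N-1 (n < N). *)
Definition rsum (N : nat) (x : nat -> R) : R :=
  fold_right Rplus 0 (map x (seq 0 N)).
Definition Rbar_sum (N : nat) (x : nat -> Rbar) : Rbar :=
  fold_right Rbar_plus (Finite 0) (map x (seq 0 N)).

Definition log2 (x : R) : R := ln x / ln 2.

Definition rate (g s2 p B : R) : R := B * log2 (1 + g * p / (s2 * B)).

(* Principal branch of Lambert W: for z >= -1/e, the x >= -1 with x e^x = z. *)
Definition LambertW (z : R) : R :=
  epsilon (inhabits 0) (fun w => -1 <= w /\ w * exp w = z).

Definition right_lim0 (h : R -> R) : Rbar :=
  epsilon (inhabits m_infty)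
    (fun l => filterlim h (at_right 0) (Rbar_locally l)).

(* f_n extended to 0 by its limit at 0^+ (possibly -oo). *)
Definition fext (h : R -> R) (x : R) : Rbar :=
  if Rlt_dec 0 x then Finite (h x) else right_lim0 h.

Definition feasible (N : nat) (Btot : R) (g s2 rmin : nat -> R)
  (p B : nat -> R) : Prop :=
  (forall n, (n < N)%nat -> 0 <= p n /\ 0 < B n) /\
  rsum N B <= Btot /\
  (forall n, (n < N)%nat -> rmin n <= rate (g n) (s2 n) (p n) (B n)).

Definition objective (N : nat) (g s2 pcir c : nat -> R) (f : nat -> R -> R)
  (re beta nu : nat -> R) (p B : nat -> R) : Rbar :=
  Rbar_sum N (fun n =>
    Rbar_plus
      (Rbar_mult (Finite (nu n * c n))
                 (fext (f n) (rate (g n) (s2 n) (p n) (B n) - re n)))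
      (Finite (- (nu n * beta n * (p n + pcir n))))).

Definition globally_optimal (N : nat) (Btot : R) (g s2 pcir c : nat -> R)
  (f : nat -> R -> R) (re rmin beta nu : nat -> R) (p B : nat -> R) : Prop :=
  feasible N Btot g s2 rmin p B /\
  forall p' B', feasible N Btot g s2 rmin p' B' ->
    Rbar_le (objective N g s2 pcir c f re beta nu p' B')
            (objective N g s2 pcir c f re beta nu p B).

Definition psi (g s2 beta nu lam : R) : R :=
  exp (1 + LambertW (/ exp 1 * (g * lam / (nu * beta * s2) - 1))) - 1.

(* "f'(xi) = v" for xi >= 0, with f'(0) the (finite) limit of f' at 0^+. *)
Definition deriv_value (h : R -> R) (xi v : R) : Prop :=
  (0 < xi /\ Derive h xi = v) \/
  (xi = 0 /\ filterlim (Derive h) (at_right 0) (locally v)).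

Definition gamma_target (g s2 c beta ps : R) : R :=
  beta * s2 * (1 + ps) * ln 2 / (c * g).

Definition is_gamma (h : R -> R) (re v gam : R) : Prop :=
  (exists xi, 0 <= xi /\ deriv_value h xi v /\ gam = re + xi) \/
  ((~ exists xi, 0 <= xi /\ deriv_value h xi v) /\ gam = re).

Definition Bcal (gam rmin ps : R) : R := Rmax gam rmin / log2 (1 + ps).

(* Main.v *)
Require Import Defs.
From Stdlib Require Import Reals Lra Lia List Classical ClassicalEpsilon.
From Coquelicot Require Import Coquelicot.
Open Scope R_scope.

Lemma ball0 (d : R) u : ball 0 d u <-> Rabs u < d.
Proof.
  unfold ball; simpl; unfold AbsRing_ball, abs, minus, plus, opp; simpl.
  rewrite Ropp_0, Rplus_0_r. tauto.
Qed.

Lemma ball_R (c d : R) u : ball c d u <-> Rabs (u - c) < d.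
Proof.
  unfold ball; simpl; unfold AbsRing_ball, abs, minus, plus, opp; simpl. tauto.
Qed.

Lemma at_right_pt (P : R -> Prop) : at_right 0 P -> exists d, 0 < d /\ forall u, 0 < u < d -> P u.
Proof.
  intros [d Hd]. exists d. split. apply cond_pos. intros u Hu. apply Hd.
  apply ball0. rewrite Rabs_right; lra. lra.
Qed.

Lemma at_right_intro (P : R -> Prop) d : 0 < d -> (forall u, 0 < u < d -> P u) -> at_right 0 P.
Proof.
  intros Hd H. exists (mkposreal d Hd). intros u Hu Hp. apply H. split; auto.
  apply (proj1 (ball_R 0 d u)) in Hu. rewrite Rminus_0_r, Rabs_right in Hu; lra.
Qed.

Lemma mvt_ex (h : R -> R) a b : a < b -> (forall x, a <= x <= b -> ex_derive h x) ->
  exists c, a < c < b /\ h b - h a = Derive h c * (b - a).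
Proof.
  intros Hab Hd. destruct (MVT_cor2 h (Derive h) a b Hab) as [c [Hc1 Hc2]].
  intros c Hc. apply is_derive_Reals. apply Derive_correct. auto.
  exists c. split; auto.
Qed.

Lemma incr_of (h : R -> R) : (forall x, 0 < x -> ex_derive h x /\ 0 < Derive h x) ->
  forall a b, 0 < a -> a < b -> h a < h b.
Proof.
  intros H a b Ha Hab. destruct (mvt_ex h a b Hab) as [c [Hc E]].
  intros x Hx; apply H; lra.
  assert (0 < Derive h c) by (apply H; lra). nra.
Qed.

Lemma decr_of (h : R -> R) : (forall x, 0 < x -> ex_derive (Derive h) x /\ Derive (Derive h) x <= 0) ->
  forall a b, 0 < a -> a <= b -> Derive h b <= Derive h a.
Proof.
  intros H a b Ha Hab. destruct (Req_dec a b) as [->|Hne]. lra.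
  destruct (mvt_ex (Derive h) a b) as [c [Hc E]]. lra.
  intros x Hx; apply H; lra.
  assert (Derive (Derive h) c <= 0) by (apply H; lra). nra.
Qed.

Lemma right_lim0_spec (h : R -> R) : (forall a b, 0 < a -> a < b -> h a < h b) ->
  filterlim h (at_right 0) (Rbar_locally (right_lim0 h)) /\ right_lim0 h <> p_infty.
Proof.
  intros Hi.
  assert (Hex : exists l, filterlim h (at_right 0) (Rbar_locally l)).
  { set (E := fun y => exists x, 0 < x /\ y = h x).
    destruct (Glb_Rbar_correct E) as [Hlb Hgr].
    exists (Glb_Rbar E).
    destruct (Glb_Rbar E) as [l| |] eqn:El.
    - intros P HP. destruct HP as [eps Heps].
      assert (Hx0 : exists x0, 0 < x0 /\ h x0 < l + eps).
      { apply NNPP; intro Hn.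
        assert (Rbar_le (l + eps) l).
        { apply Hgr. intros y [x [Hx ->]]. simpl. apply Rnot_lt_le. intro Hc. apply Hn. exists x. auto. }
        simpl in H. destruct eps; simpl in H; lra. }
      destruct Hx0 as [x0 [Hx0 Hhx0]].
      apply at_right_intro with x0; auto. intros u Hu. apply Heps.
      assert (Rbar_le l (h u)) by (apply Hlb; exists u; split; [lra|auto]).
      simpl in H. assert (h u < h x0) by (apply Hi; lra).
      apply ball_R. rewrite Rabs_right; lra.
    - exfalso. specialize (Hlb (h 1) (ex_intro _ 1 (conj Rlt_0_1 eq_refl))). simpl in Hlb. auto.
    - intros P [M HM].
      assert (Hx0 : exists x0, 0 < x0 /\ h x0 < M).
      { apply NNPP; intro Hn.
        assert (Rbar_le M m_infty).
        { apply Hgr. intros y [x [Hx ->]]. simpl. apply Rnot_lt_le. intro Hc. apply Hn. exists x. auto. }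
        simpl in H. auto. }
      destruct Hx0 as [x0 [Hx0 Hhx0]].
      apply at_right_intro with x0; auto. intros u Hu. apply HM.
      assert (h u < h x0) by (apply Hi; lra). lra. }
  assert (Hl := epsilon_spec (inhabits m_infty) _ Hex).
  fold (right_lim0 h) in Hl. split; auto.
  intro Hp. rewrite Hp in Hl.
  assert (Hev : at_right 0 (fun u => h 1 < h u)).
  { apply Hl. exists (h 1). auto. }
  apply at_right_pt in Hev. destruct Hev as [d [Hd Hu]].
  assert (h (Rmin d 1 / 2) < h 1) by (apply Hi; unfold Rmin; destruct Rle_dec; lra).
  assert (h 1 < h (Rmin d 1 / 2)) by (apply Hu; unfold Rmin; destruct Rle_dec; lra). lra.
Qed.


Definition pw (g s2 r B : R) := s2 * B * (exp (r * ln 2 / B) - 1) / g.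

Ltac nz := repeat (match goal with |- _ /\ _ => split | |- _ * _ <> 0 => apply Rmult_integral_contrapositive_currified end); apply Rgt_not_eq; try lra; nra.

Lemma ln2_pos : 0 < ln 2.
Proof. assert (H := ln_lt_2). lra. Qed.

Lemma rate_pw g s2 r B : 0 < g -> 0 < s2 -> 0 < B -> rate g s2 (pw g s2 r B) B = r.
Proof.
  intros Hg Hs HB. unfold rate, pw, log2.
  assert (E : 1 + g * (s2 * B * (exp (r * ln 2 / B) - 1) / g) / (s2 * B) = exp (r * ln 2 / B)).
  { field. nz. }
  rewrite E, ln_exp. assert (H2 := ln2_pos). field. nz.
Qed.

Lemma pw_rate g s2 p B : 0 < g -> 0 < s2 -> 0 < B -> 0 <= p -> pw g s2 (rate g s2 p B) B = p.
Proof.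
  intros Hg Hs HB Hp. unfold rate, pw, log2.
  assert (E : B * (ln (1 + g * p / (s2 * B)) / ln 2) * ln 2 / B = ln (1 + g * p / (s2 * B))).
  { assert (H2 := ln2_pos). field. nz. }
  rewrite E, exp_ln. field. nz.
  assert (0 <= g * p / (s2 * B)). { apply Rmult_le_pos. nra. left. apply Rinv_0_lt_compat. nra. }
  lra.
Qed.

Lemma d_pw_r g s2 r B : 0 < g -> 0 < B ->
  derivable_pt_lim (fun s => pw g s2 (r + s) B) 0 (s2 / g * ln 2 * exp (r * ln 2 / B)).
Proof.
  intros Hg HB. apply is_derive_Reals. unfold pw. auto_derive. auto.
  unfold Rdiv. unfold Rdiv. rewrite Rplus_0_r. field. nz.
Qed.

Lemma d_pw_B g s2 r B : 0 < g -> 0 < B ->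
  derivable_pt_lim (fun t => pw g s2 r (B + t)) 0
    (s2 / g * (exp (r * ln 2 / B) - 1 - r * ln 2 / B * exp (r * ln 2 / B))).
Proof.
  intros Hg HB. apply is_derive_Reals. unfold pw. auto_derive. lra.
  unfold Rdiv. rewrite Rplus_0_r. field. nz.
Qed.

Lemma d_pw_Bm g s2 r B : 0 < g -> 0 < B ->
  derivable_pt_lim (fun t => pw g s2 r (B - t)) 0
    (- (s2 / g * (exp (r * ln 2 / B) - 1 - r * ln 2 / B * exp (r * ln 2 / B)))).
Proof.
  intros Hg HB. apply is_derive_Reals. unfold pw. auto_derive. lra.
  unfold Rdiv. rewrite Ropp_0, Rplus_0_r. field. nz.
Qed.

Lemma locmax_r (h : R -> R) l d : derivable_pt_lim h 0 l -> 0 < d ->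
  (forall t, 0 < t < d -> h t <= h 0) -> l <= 0.
Proof.
  intros Hd Hp Hm. apply Rnot_lt_le. intro Hl.
  destruct (Hd (l / 2) ltac:(lra)) as [e He].
  set (t := Rmin d e / 2).
  assert (Ht : 0 < t < d /\ t < e). { unfold t, Rmin. destruct Rle_dec; destruct e; simpl in *; lra. }
  assert (Hte : Rabs t < e) by (rewrite Rabs_right; lra).
  specialize (He t ltac:(lra) Hte). rewrite Rplus_0_l in He.
  specialize (Hm t ltac:(lra)).
  apply Rabs_def2 in He. destruct He as [He1 He2].
  assert ((h t - h 0) / t <= 0).
  { unfold Rdiv. apply Rmult_le_0_r. lra. left. apply Rinv_0_lt_compat. lra. }
  lra.
Qed.

Lemma locmax_l (h : R -> R) l d : derivable_pt_lim h 0 l -> 0 < d ->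
  (forall t, 0 < t < d -> h (- t) <= h 0) -> 0 <= l.
Proof.
  intros Hd Hp Hm. apply Rnot_lt_le. intro Hl.
  destruct (Hd (- l / 2) ltac:(lra)) as [e He].
  set (t := Rmin d e / 2).
  assert (Ht : 0 < t < d /\ t < e). { unfold t, Rmin. destruct Rle_dec; destruct e; simpl in *; lra. }
  assert (Hte : Rabs (- t) < e) by (rewrite Rabs_Ropp, Rabs_right; lra).
  specialize (He (- t) ltac:(lra) Hte). rewrite Rplus_0_l in He.
  specialize (Hm t ltac:(lra)).
  apply Rabs_def2 in He. destruct He as [He1 He2].
  assert ((h (-t) - h 0) / (- t) >= 0).
  { unfold Rdiv. apply Rle_ge. assert (/ - t < 0) by (apply Rinv_lt_0_compat; lra). nra. }
  lra.
Qed.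

Lemma pw_nonneg g s2 r B : 0 < g -> 0 < s2 -> 0 < B -> 0 <= r -> 0 <= pw g s2 r B.
Proof.
  intros Hg Hs HB Hr. unfold pw.
  assert (H2 := ln2_pos).
  assert (0 <= r * ln 2 / B) by (apply Rmult_le_pos; [nra|left; apply Rinv_0_lt_compat; lra]).
  assert (1 + r * ln 2 / B <= exp (r * ln 2 / B)) by apply exp_ineq1_le.
  apply Rmult_le_pos; [|left; apply Rinv_0_lt_compat; lra]. apply Rmult_le_pos; nra.
Qed.


Lemma xexp_strict u v : -1 <= u -> u < v -> u * exp u < v * exp v.
Proof.
  intros Hu Huv.
  destruct (Rle_lt_dec u 0) as [Hu0|Hu0].
  - assert (E : exp u = exp v * exp (u - v)) by (rewrite <- exp_plus; f_equal; ring).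
    rewrite E.
    assert (He : 1 + (u - v) < exp (u - v)) by (apply exp_ineq1; lra).
    assert (Hv : 0 < exp v) by apply exp_pos.
    destruct (Req_dec u 0) as [->|Hn0].
    + rewrite Rmult_0_l. apply Rmult_lt_0_compat; lra.
    + assert (- u * (1 + (u - v)) < - u * exp (u - v)) by (apply Rmult_lt_compat_l; lra).
      assert (v - u * exp (u - v) > 0) by nra.
      nra.
  - assert (exp u < exp v) by (apply exp_increasing; lra).
    assert (0 < exp u) by apply exp_pos. nra.
Qed.

Lemma W_eq w z : -1 <= w -> w * exp w = z -> LambertW z = w.
Proof.
  intros H1 H2. unfold LambertW.
  assert (Hex : exists x, -1 <= x /\ x * exp x = z) by eauto.
  destruct (epsilon_spec (inhabits 0) _ Hex) as [A B].
  set (e := epsilon _ _) in *.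
  destruct (Rtotal_order e w) as [Hl|[Heq|Hg]]; auto.
  - assert (e * exp e < w * exp w) by (apply xexp_strict; auto). lra.
  - assert (w * exp w < e * exp e) by (apply xexp_strict; auto). lra.
Qed.

Lemma lam_pos y : 1 < y -> 0 < y * ln y - y + 1.
Proof.
  intros Hy. set (u := ln y).
  assert (Hu : 0 < u) by (unfold u; rewrite <- ln_1; apply ln_increasing; lra).
  assert (Ey : y = exp u) by (unfold u; rewrite exp_ln; lra).
  assert (H1 : 1 + (- u) < exp (- u)) by (apply exp_ineq1; lra).
  assert (E1 : exp u * exp (- u) = 1) by (rewrite <- exp_plus, Rplus_opp_r, exp_0; auto).
  rewrite Ey. assert (0 < exp u) by apply exp_pos. nra.
Qed.

Lemma psi_eq g s2 beta nu y : 0 < g -> 0 < s2 -> 0 < beta -> 0 < nu -> 1 < y ->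
  psi g s2 beta nu (nu * beta * s2 / g * (y * ln y - y + 1)) = y - 1.
Proof.
  intros Hg Hs Hb Hn Hy. unfold psi.
  assert (Hu : 0 < ln y) by (rewrite <- ln_1; apply ln_increasing; lra).
  assert (Hw : LambertW (/ exp 1 * (g * (nu * beta * s2 / g * (y * ln y - y + 1)) / (nu * beta * s2) - 1)) = ln y - 1).
  { apply W_eq. lra.
    assert (E : exp (ln y - 1) = y * / exp 1).
    { unfold Rminus. rewrite exp_plus, exp_ln, exp_Ropp; lra. }
    rewrite E. assert (0 < exp 1) by apply exp_pos. field.
    repeat split; apply Rgt_not_eq; try nra. }
  rewrite Hw. replace (1 + (ln y - 1)) with (ln y) by ring. rewrite exp_ln; lra.
Qed.


Lemma fold_fin (T : nat -> Rbar) (t : nat -> R) l :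
  (forall k, In k l -> T k = Finite (t k)) ->
  fold_right Rbar_plus (Finite 0) (map T l) = Finite (fold_right Rplus 0 (map t l)).
Proof.
  induction l as [|a l IH]; intros H; simpl. auto.
  rewrite IH by (intros; apply H; simpl; auto). rewrite H by (simpl; auto). reflexivity.
Qed.

Lemma fold_kind (T : nat -> Rbar) l :
  (forall k, In k l -> T k = m_infty \/ exists x, T k = Finite x) ->
  (fold_right Rbar_plus (Finite 0) (map T l) = m_infty \/
   exists x, fold_right Rbar_plus (Finite 0) (map T l) = Finite x) /\
  (forall k, In k l -> T k = m_infty -> fold_right Rbar_plus (Finite 0) (map T l) = m_infty).
Proof.
  induction l as [|a l IH]; intros H; simpl.
  - split; eauto. intros k [].
  - destruct IH as [IH1 IH2]. intros; apply H; simpl; auto.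
    split.
    + destruct (H a (or_introl eq_refl)) as [->|[x ->]]; destruct IH1 as [->|[y ->]]; simpl; eauto.
    + intros k [<-|Hk] Hm.
      * rewrite Hm. destruct IH1 as [->|[y ->]]; reflexivity.
      * rewrite (IH2 k Hk Hm). destruct (H a (or_introl eq_refl)) as [->|[x ->]]; reflexivity.
Qed.

Lemma rsum_fin N (T : nat -> Rbar) (t : nat -> R) :
  (forall k, (k < N)%nat -> T k = Finite (t k)) -> Rbar_sum N T = Finite (rsum N t).
Proof.
  intros H. apply fold_fin. intros k Hk. apply in_seq in Hk. apply H. lia.
Qed.

Lemma rsum_allfin N (T : nat -> Rbar) :
  (forall k, (k < N)%nat -> T k = m_infty \/ exists x, T k = Finite x) ->
  Rbar_sum N T <> m_infty -> forall k, (k < N)%nat -> exists x, T k = Finite x.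
Proof.
  intros H Hn k Hk. destruct (fold_kind T (seq 0 N)) as [_ H2].
  intros j Hj. apply in_seq in Hj. apply H. lia.
  destruct (H k Hk) as [Hm|]; auto. exfalso. apply Hn. apply (H2 k); auto. apply in_seq. lia.
Qed.

Lemma fold_upd n X (t : nat -> R) l : NoDup l -> In n l ->
  fold_right Rplus 0 (map (fun k => if Nat.eqb k n then X else t k) l) =
  fold_right Rplus 0 (map t l) + (X - t n).
Proof.
  induction l as [|a l IH]; intros Hnd Hin; simpl. destruct Hin.
  inversion Hnd; subst.
  destruct (Nat.eqb_spec a n) as [->|Hne].
  - assert (E : fold_right Rplus 0 (map (fun k => if Nat.eqb k n then X else t k) l) = fold_right Rplus 0 (map t l)).
    { f_equal. apply map_ext_in. intros k Hk. destruct (Nat.eqb_spec k n); subst; tauto. }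
    rewrite E. ring.
  - destruct Hin as [->|Hin]. tauto. rewrite IH by auto. ring.
Qed.

Lemma rsum_upd N n X (t : nat -> R) : (n < N)%nat ->
  rsum N (fun k => if Nat.eqb k n then X else t k) = rsum N t + (X - t n).
Proof.
  intros Hn. apply fold_upd. apply seq_NoDup. apply in_seq. lia.
Qed.

Lemma rsum_ext N (t u : nat -> R) : (forall k, (k < N)%nat -> t k = u k) -> rsum N t = rsum N u.
Proof.
  intros H. unfold rsum. f_equal. apply map_ext_in. intros k Hk. apply in_seq in Hk. apply H. lia.
Qed.

Lemma fold_const c l : fold_right Rplus 0 (map (fun _ : nat => c) l) = INR (length l) * c.
Proof.
  induction l as [|a l IH]; simpl. ring. rewrite IH. destruct (length l); simpl; ring.
Qed.

Lemma rsum_const N c : rsum N (fun _ => c) = INR N * c.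
Proof. unfold rsum. rewrite fold_const, length_seq. auto. Qed.

Definition term (g s2 pcir c : R) (f : R -> R) (re beta nu : R) (p B : R) : Rbar :=
  Rbar_plus (Rbar_mult (Finite (nu * c)) (fext f (rate g s2 p B - re)))
            (Finite (- (nu * beta * (p + pcir)))).

Lemma objective_term N g s2 pcir c f re beta nu p B :
  objective N g s2 pcir c f re beta nu p B =
  Rbar_sum N (fun n => term (g n) (s2 n) (pcir n) (c n) (f n) (re n) (beta n) (nu n) (p n) (B n)).
Proof. reflexivity. Qed.

Lemma term_fin g s2 pcir c f re beta nu p B F :
  fext f (rate g s2 p B - re) = Finite F ->
  term g s2 pcir c f re beta nu p B = Finite (nu * c * F - nu * beta * (p + pcir)).
Proof. intros H. unfold term. rewrite H. simpl. reflexivity. Qed.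

Lemma term_minf g s2 pcir c f re beta nu p B : 0 < nu * c ->
  fext f (rate g s2 p B - re) = m_infty ->
  term g s2 pcir c f re beta nu p B = m_infty.
Proof.
  intros Hp H. unfold term. rewrite H. unfold Rbar_mult, Rbar_mult'.
  destruct (Rle_dec 0 (nu * c)) as [Hle|Hle]; [|lra].
  destruct (Rle_lt_or_eq_dec 0 (nu * c) Hle); [|lra]. reflexivity.
Qed.

Lemma fext_pos h x : 0 < x -> fext h x = Finite (h x).
Proof. intros H. unfold fext. destruct (Rlt_dec 0 x); [auto|lra]. Qed.


Lemma dlim_scal h x l a : derivable_pt_lim h x l -> derivable_pt_lim (fun t => a * h t) x (a * l).
Proof. intros H. exact (derivable_pt_lim_scal h a x l H). Qed.

Lemma dlim_plus h1 h2 x l1 l2 : derivable_pt_lim h1 x l1 -> derivable_pt_lim h2 x l2 ->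
  derivable_pt_lim (fun t => h1 t + h2 t) x (l1 + l2).
Proof. intros H1 H2. exact (derivable_pt_lim_plus h1 h2 x l1 l2 H1 H2). Qed.

Lemma d_shift h a : ex_derive h a -> derivable_pt_lim (fun s => h (a + s)) 0 (Derive h a).
Proof.
  intros H. apply Derive_correct, is_derive_Reals in H.
  intros eps Heps. destruct (H eps Heps) as [d Hd]. exists d. intros s Hs Hsd.
  rewrite Rplus_0_l, Rplus_0_r. apply Hd; auto.
Qed.

Lemma lim_bound (h : R -> R) (Fz s : R) :
  (forall x, 0 < x -> ex_derive h x /\ 0 < Derive h x) ->
  (forall a b, 0 < a -> a <= b -> Derive h b <= Derive h a) ->
  filterlim h (at_right 0) (locally Fz) -> 0 < s -> Fz <= h s - s * Derive h s.
Proof.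
  intros Hd Hdec Hl Hs. apply Rnot_lt_le. intro Hc. change (h s - s * Derive h s < Fz) in Hc.
  set (q := h s - s * Derive h s). set (eps := (Fz - q) / 2).
  assert (Heps : 0 < eps) by (unfold eps, q; lra).
  assert (HD : 0 < Derive h s) by (apply Hd; auto).
  assert (Hev := proj1 (filterlim_locally h Fz) Hl (mkposreal eps Heps)).
  apply at_right_pt in Hev. destruct Hev as [d [Hd0 Hu]].
  set (u := Rmin (Rmin d s) (eps / Derive h s) / 2).
  assert (He2 : 0 < eps / Derive h s) by (apply Rdiv_lt_0_compat; lra).
  assert (Hu1 : 0 < u /\ u < d /\ u < s /\ u < eps / Derive h s).
  { unfold u, Rmin. repeat destruct Rle_dec; lra. }
  specialize (Hu u ltac:(lra)). apply ball_R in Hu. simpl in Hu.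
  apply Rabs_def2 in Hu.
  destruct (mvt_ex h u s) as [cc [Hcc E]]. lra. intros x Hx; apply Hd; lra.
  assert (Derive h s <= Derive h cc) by (apply Hdec; lra).
  assert (u * Derive h s < eps).
  { 
    assert (u * Derive h s < eps / Derive h s * Derive h s) by (apply Rmult_lt_compat_r; lra).
    unfold Rdiv in H0. rewrite Rmult_assoc, Rinv_l, Rmult_1_r in H0; lra. }
  assert (h s - h u >= (s - u) * Derive h s) by nra.
  unfold minus, plus, opp in Hu; simpl in Hu. unfold eps in *; unfold q in *. lra.
Qed.

Lemma corner (h q : R -> R) (Fz L xi a b : R) :
  (forall x, 0 < x -> ex_derive h x /\ 0 < Derive h x) ->
  (forall x y, 0 < x -> x <= y -> Derive h y <= Derive h x) ->
  filterlim h (at_right 0) (locally Fz) -> 0 < a -> 0 < b ->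
  (forall s, 0 < s -> a * (h s - Fz) <= b * (q s - q 0)) ->
  derivable_pt_lim q 0 L -> 0 < xi -> Derive h xi = b * L / a ->
  filterlim (Derive h) (at_right 0) (locally (b * L / a)).
Proof.
  intros Hd Hdec Hl Ha Hb Hopt Hq Hxi Hdxi.
  apply filterlim_locally. intros [eps Heps]. simpl.
  assert (He' : 0 < eps * a / b) by (apply Rdiv_lt_0_compat; nra).
  destruct (Hq _ He') as [[dl Hdl] Hq2]. simpl in Hq2.
  apply at_right_intro with (Rmin dl xi). unfold Rmin; destruct Rle_dec; lra.
  intros s Hs. assert (Hs1 : s < dl /\ s < xi) by (unfold Rmin in Hs; destruct Rle_dec; lra).
  apply ball_R.
  assert (Hlow : b * L / a <= Derive h s) by (rewrite <- Hdxi; apply Hdec; lra).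
  assert (Hi := lim_bound h Fz s Hd Hdec Hl ltac:(lra)).
  assert (Ho := Hopt s ltac:(lra)).
  assert (Hqq : Rabs s < dl) by (rewrite Rabs_right; lra).
  specialize (Hq2 s ltac:(lra) Hqq). rewrite Rplus_0_l in Hq2. apply Rabs_def2 in Hq2.
  destruct Hq2 as [Hq2 _].
  assert (Hqs : q s - q 0 < s * (L + eps * a / b)).
  { assert ((q s - q 0) / s < L + eps * a / b) by lra.
    apply Rmult_lt_compat_l with (r := s) in H; [|lra].
    unfold Rdiv in H. rewrite <- Rmult_assoc, (Rmult_comm s (q s - q 0)), Rmult_assoc, Rinv_r, Rmult_1_r in H; lra. }
  assert (Hup : a * s * Derive h s < b * s * (L + eps * a / b)) by nra.
  assert (Hup2 : Derive h s < b * L / a + eps).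
  { assert (E : b * s * (L + eps * a / b) = a * s * (b * L / a + eps)) by (field; lra).
    rewrite E in Hup. apply Rmult_lt_reg_l with (a * s). nra. lra. }
  apply Rabs_def1; lra.
Qed.

Lemma user_facts g s2 p B rmin : 0 < g -> 0 < s2 -> 0 <= p -> 0 < B -> 0 < rmin ->
  rmin <= rate g s2 p B ->
  0 < p /\ 1 < 1 + g * p / (s2 * B) /\ p = pw g s2 (rate g s2 p B) B /\
  rate g s2 p B * ln 2 / B = ln (1 + g * p / (s2 * B)) /\
  exp (rate g s2 p B * ln 2 / B) = 1 + g * p / (s2 * B).
Proof.
  intros Hg Hs Hp HB Hrm Hr.
  assert (H2 := ln2_pos).
  assert (Eu : rate g s2 p B * ln 2 / B = ln (1 + g * p / (s2 * B))).
  { unfold rate, log2. field. split; apply Rgt_not_eq; lra. }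
  assert (Hq : 0 <= g * p / (s2 * B)).
  { apply Rmult_le_pos. nra. left. apply Rinv_0_lt_compat. nra. }
  assert (Hp0 : 0 < p).
  { destruct Hp as [Hp|Hp]; auto. subst p. exfalso.
    unfold rate, log2 in Hr. replace (1 + g * 0 / (s2 * B)) with 1 in Hr by (field; split; apply Rgt_not_eq; lra). rewrite ln_1 in Hr.
    unfold Rdiv in Hr. lra. }
  assert (Hq' : 0 < g * p / (s2 * B)).
  { apply Rmult_lt_0_compat. nra. apply Rinv_0_lt_compat. nra. }
  repeat split; auto.
  - lra.
  - symmetry. apply pw_rate; auto; lra.
  - rewrite Eu, exp_ln; lra.
Qed.

Lemma dB_val g s2 r B y : r * ln 2 / B = ln y -> exp (r * ln 2 / B) = y ->
  s2 / g * (exp (r * ln 2 / B) - 1 - r * ln 2 / B * exp (r * ln 2 / B)) =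
  - (s2 / g * (y * ln y - y + 1)).
Proof. intros E1 E2. rewrite E1 in *. rewrite E2. ring. Qed.


Theorem theorem2 (N : nat) (Btot : R) (g s2 pcir c re rmin : nat -> R)
  (f : nat -> R -> R) (beta nu : nat -> R) :
  (1 <= N)%nat -> 0 < Btot ->
  (forall n, (n < N)%nat ->
     0 < g n /\ 0 < s2 n /\ 0 < pcir n /\ 0 < c n /\ 0 <= re n /\
     0 < rmin n /\ re n <= rmin n /\ 0 < beta n /\ 0 < nu n) ->
  (forall n, (n < N)%nat -> forall x, 0 < x ->
     ex_derive (f n) x /\ 0 < Derive (f n) x /\
     ex_derive (Derive (f n)) x /\ Derive (Derive (f n)) x <= 0) ->
  forall p B : nat -> R,
  globally_optimal N Btot g s2 pcir c f re rmin beta nu p B ->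
  exists lam : R, 0 < lam /\
  exists gam : nat -> R,
    (forall n, (n < N)%nat ->
       is_gamma (f n) (re n)
         (gamma_target (g n) (s2 n) (c n) (beta n)
            (psi (g n) (s2 n) (beta n) (nu n) lam)) (gam n)) /\
    rsum N (fun n => Bcal (gam n) (rmin n) (psi (g n) (s2 n) (beta n) (nu n) lam))
      = Btot /\
    (forall n, (n < N)%nat ->
       B n = Bcal (gam n) (rmin n) (psi (g n) (s2 n) (beta n) (nu n) lam) /\
       p n = s2 n * B n * psi (g n) (s2 n) (beta n) (nu n) lam / g n).
Proof.
  intros HN HBt Hpar Hf p B [Hfeas Hopt].
  destruct Hfeas as [HpB [Hsum Hrt]].
  assert (Hln2 := ln2_pos).
  assert (Hinc : forall k, (k < N)%nat -> forall a b, 0 < a -> a < b -> f k a < f k b).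
  { intros k Hk. apply incr_of. intros x Hx. destruct (Hf k Hk x Hx) as [? [? _]]. auto. }
  assert (Hdec : forall k, (k < N)%nat -> forall a b, 0 < a -> a <= b -> Derive (f k) b <= Derive (f k) a).
  { intros k Hk. apply decr_of. intros x Hx. destruct (Hf k Hk x Hx) as [_ [_ ?]]. auto. }
  assert (Hfx : forall k, (k < N)%nat -> forall x, (exists F, fext (f k) x = Finite F) \/ fext (f k) x = m_infty).
  { intros k Hk x. unfold fext. destruct (Rlt_dec 0 x). left; eauto.
    destruct (right_lim0_spec (f k) (Hinc k Hk)) as [_ Hn].
    destruct (right_lim0 (f k)); eauto. contradiction. }
  assert (Hnotm : objective N g s2 pcir c f re beta nu p B <> m_infty).
  { pose (Br := fun _ : nat => Btot / INR N).
    pose (pr := fun k => pw (g k) (s2 k) (rmin k + 1) (Br k)).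
    assert (HNpos : 0 < INR N) by (apply lt_0_INR; lia).
    assert (HBr : 0 < Btot / INR N) by (apply Rdiv_lt_0_compat; lra).
    assert (Hfr : feasible N Btot g s2 rmin pr Br).
    { split; [|split].
      - intros k Hk. destruct (Hpar k Hk) as (Hg & Hs & _ & _ & _ & Hrm & _). split; [|exact HBr].
        apply pw_nonneg; auto; lra.
      - unfold Br. rewrite rsum_const. right. field. lra.
      - intros k Hk. destruct (Hpar k Hk) as (Hg & Hs & _). unfold pr. rewrite rate_pw; auto; unfold Br; lra. }
    assert (Hob : exists v, objective N g s2 pcir c f re beta nu pr Br = Finite v).
    { eexists. rewrite objective_term. apply rsum_fin. intros k Hk.
      destruct (Hpar k Hk) as (Hg & Hs & _ & _ & _ & Hrm & Hrr & _).
      apply term_fin. unfold pr. rewrite rate_pw by (auto; unfold Br; lra). apply fext_pos. lra. }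
    destruct Hob as [v Hv]. intro Hm. specialize (Hopt pr Br Hfr). rewrite Hv, Hm in Hopt. exact Hopt. }
  pose (r := fun k => rate (g k) (s2 k) (p k) (B k)).
  assert (HF : forall k, (k < N)%nat -> exists F, fext (f k) (r k - re k) = Finite F).
  { rewrite objective_term in Hnotm.
    assert (Hcases : forall k, (k < N)%nat ->
      term (g k) (s2 k) (pcir k) (c k) (f k) (re k) (beta k) (nu k) (p k) (B k) = m_infty \/
      exists x, term (g k) (s2 k) (pcir k) (c k) (f k) (re k) (beta k) (nu k) (p k) (B k) = Finite x).
    { intros k Hk. destruct (Hpar k Hk) as (_&_&_&Hc&_&_&_&_&Hnu).
      destruct (Hfx k Hk (r k - re k)) as [[F HF]|Hm].
      - right; eexists; apply term_fin; exact HF.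
      - left; apply term_minf; [nra | exact Hm]. }
    assert (H := rsum_allfin N _ Hcases Hnotm).
    intros k Hk. destruct (Hfx k Hk (r k - re k)) as [HF|Hm]; auto.
    destruct (H k Hk) as [x Hx]. rewrite term_minf in Hx. discriminate.
    destruct (Hpar k Hk) as (_&_&_&Hc&_&_&_&_&Hnu); nra. exact Hm. }
  pose (F := fun k => real (fext (f k) (r k - re k))).
  assert (HFk : forall k, (k < N)%nat -> fext (f k) (r k - re k) = Finite (F k)).
  { intros k Hk. destruct (HF k Hk) as [x Hx]. unfold F. rewrite Hx. reflexivity. }
  pose (t := fun k => nu k * c k * F k - nu k * beta k * (p k + pcir k)).
  assert (Hterm : forall k, (k < N)%nat ->
    term (g k) (s2 k) (pcir k) (c k) (f k) (re k) (beta k) (nu k) (p k) (B k) = Finite (t k)).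
  { intros k Hk. apply term_fin. apply HFk; auto. }
  assert (PP1 : forall n P Bn T, (n < N)%nat -> 0 <= P -> 0 < Bn ->
     rmin n <= rate (g n) (s2 n) P Bn -> rsum N B + (Bn - B n) <= Btot ->
     term (g n) (s2 n) (pcir n) (c n) (f n) (re n) (beta n) (nu n) P Bn = Finite T -> T <= t n).
  { intros n P Bn T Hn HP HBn Hr HS HT.
    pose (p' := fun k => if Nat.eqb k n then P else p k).
    pose (B' := fun k => if Nat.eqb k n then Bn else B k).
    pose (t' := fun k => if Nat.eqb k n then T else t k).
    assert (Hf' : feasible N Btot g s2 rmin p' B').
    { split; [|split].
      - intros k Hk. unfold p', B'. destruct (Nat.eqb_spec k n); [subst; auto|]. apply HpB; auto.
      - unfold B'. rewrite rsum_upd; auto.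
      - intros k Hk. unfold p', B'. destruct (Nat.eqb_spec k n); [subst; auto|]. apply Hrt; auto. }
    specialize (Hopt p' B' Hf'). rewrite !objective_term in Hopt.
    rewrite (rsum_fin N _ t Hterm) in Hopt.
    rewrite (rsum_fin N _ t') in Hopt.
    - simpl in Hopt. unfold t' in Hopt. rewrite rsum_upd in Hopt; auto. lra.
    - intros k Hk. unfold p', B', t'. destruct (Nat.eqb_spec k n); [subst; auto|]. apply Hterm; auto. }
  assert (PP2 : forall n m Pn Bn Pm Bm Tn Tm, (n < N)%nat -> (m < N)%nat -> n <> m ->
     0 <= Pn -> 0 < Bn -> 0 <= Pm -> 0 < Bm ->
     rmin n <= rate (g n) (s2 n) Pn Bn -> rmin m <= rate (g m) (s2 m) Pm Bm ->
     rsum N B + (Bn - B n) + (Bm - B m) <= Btot ->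
     term (g n) (s2 n) (pcir n) (c n) (f n) (re n) (beta n) (nu n) Pn Bn = Finite Tn ->
     term (g m) (s2 m) (pcir m) (c m) (f m) (re m) (beta m) (nu m) Pm Bm = Finite Tm ->
     Tn + Tm <= t n + t m).
  { intros n m Pn Bn Pm Bm Tn Tm Hn Hm Hnm HPn HBn HPm HBm Hrn Hrm HS HTn HTm.
    pose (p1 := fun k => if Nat.eqb k m then Pm else p k).
    pose (B1 := fun k => if Nat.eqb k m then Bm else B k).
    pose (t1 := fun k => if Nat.eqb k m then Tm else t k).
    pose (p' := fun k => if Nat.eqb k n then Pn else p1 k).
    pose (B' := fun k => if Nat.eqb k n then Bn else B1 k).
    pose (t' := fun k => if Nat.eqb k n then Tn else t1 k).
    assert (Ht1 : t1 n = t n) by (unfold t1; destruct (Nat.eqb_spec n m); [contradiction|auto]).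
    assert (HB1 : B1 n = B n) by (unfold B1; destruct (Nat.eqb_spec n m); [contradiction|auto]).
    assert (Hf' : feasible N Btot g s2 rmin p' B').
    { split; [|split].
      - intros k Hk. unfold p', B', p1, B1. destruct (Nat.eqb_spec k n); [subst; auto|].
        destruct (Nat.eqb_spec k m); [subst; auto|]. apply HpB; auto.
      - unfold B'. rewrite rsum_upd; auto. rewrite HB1. unfold B1. rewrite rsum_upd; auto. lra.
      - intros k Hk. unfold p', B', p1, B1. destruct (Nat.eqb_spec k n); [subst; auto|].
        destruct (Nat.eqb_spec k m); [subst; auto|]. apply Hrt; auto. }
    specialize (Hopt p' B' Hf'). rewrite !objective_term in Hopt.
    rewrite (rsum_fin N _ t Hterm) in Hopt.
    rewrite (rsum_fin N _ t') in Hopt.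
    - simpl in Hopt. unfold t' in Hopt. rewrite rsum_upd in Hopt; auto. rewrite Ht1 in Hopt.
      unfold t1 in Hopt. rewrite rsum_upd in Hopt; auto. lra.
    - intros k Hk. unfold p', B', t', p1, B1, t1. destruct (Nat.eqb_spec k n); [subst; auto|].
      destruct (Nat.eqb_spec k m); [subst; auto|]. apply Hterm; auto. }
  pose (y := fun k => 1 + g k * p k / (s2 k * B k)).
  assert (Huser : forall k, (k < N)%nat ->
    0 < p k /\ 1 < y k /\ p k = pw (g k) (s2 k) (r k) (B k) /\
    r k * ln 2 / B k = ln (y k) /\ exp (r k * ln 2 / B k) = y k).
  { intros k Hk. destruct (Hpar k Hk) as (Hg&Hs&_&_&_&Hrm&_). destruct (HpB k Hk).
    apply user_facts with (rmin k); auto. }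
  pose (lam := fun k => nu k * beta k * s2 k / g k * (y k * ln (y k) - y k + 1)).
  assert (Hlam : forall k, (k < N)%nat -> 0 < lam k).
  { intros k Hk. destruct (Hpar k Hk) as (Hg&Hs&_&_&_&_&_&Hb&Hnu).
    destruct (Huser k Hk) as (_&Hy&_). unfold lam. apply Rmult_lt_0_compat.
    apply Rdiv_lt_0_compat; [|auto]. repeat apply Rmult_lt_0_compat; auto. apply lam_pos; auto. }
  assert (Hshift : forall n tt, (n < N)%nat -> 0 < B n + tt ->
    term (g n) (s2 n) (pcir n) (c n) (f n) (re n) (beta n) (nu n) (pw (g n) (s2 n) (r n) (B n + tt)) (B n + tt)
     = Finite (nu n * c n * F n - nu n * beta n * (pw (g n) (s2 n) (r n) (B n + tt) + pcir n))).
  { intros n tt Hn Hpos. destruct (Hpar n Hn) as (Hg&Hs&_).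
    apply term_fin. rewrite rate_pw by auto. apply HFk; auto. }
  assert (Hshift2 : forall n tt, (n < N)%nat -> 0 < B n + tt ->
    0 <= pw (g n) (s2 n) (r n) (B n + tt) /\ rmin n <= rate (g n) (s2 n) (pw (g n) (s2 n) (r n) (B n + tt)) (B n + tt)).
  { intros n tt Hn Hpos. destruct (Hpar n Hn) as (Hg&Hs&_&_&_&Hrm&_).
    assert (rmin n <= r n) by (apply Hrt; auto). split. apply pw_nonneg; auto; lra. rewrite rate_pw; auto. }
  assert (HsumEq : rsum N B = Btot).
  { destruct (Rle_lt_or_eq_dec _ _ Hsum) as [Hlt|]; auto. exfalso.
    assert (H0 : (0 < N)%nat) by lia.
    destruct (Hpar 0%nat H0) as (Hg&Hs&_&Hc&_&Hrm&_&Hb&Hnu).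
    destruct (Huser 0%nat H0) as (Hp0&Hy0&Epw&Eu&Ee).
    destruct (HpB 0%nat H0) as [_ HB0].
    assert (Hd := dlim_scal _ _ _ (-(nu 0%nat * beta 0%nat)) (d_pw_B (g 0%nat) (s2 0%nat) (r 0%nat) (B 0%nat) Hg HB0)).
    assert (Hle := locmax_r _ _ (Btot - rsum N B) Hd ltac:(lra)).
    rewrite dB_val with (y := y 0%nat) in Hle by auto.
    assert (0 < lam 0%nat) by auto. unfold lam in H.
    assert (Hl : forall tt, 0 < tt < Btot - rsum N B ->
      - (nu 0%nat * beta 0%nat) * pw (g 0%nat) (s2 0%nat) (r 0%nat) (B 0%nat + tt) <=
      - (nu 0%nat * beta 0%nat) * pw (g 0%nat) (s2 0%nat) (r 0%nat) (B 0%nat + 0)).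
    { intros tt Htt. rewrite Rplus_0_r, <- Epw.
      destruct (Hshift2 0%nat tt H0 ltac:(lra)) as [Hn1 Hn2].
      assert (T := PP1 0%nat _ (B 0%nat + tt) _ H0 Hn1 ltac:(lra) Hn2 ltac:(lra) (Hshift 0%nat tt H0 ltac:(lra))).
      unfold t in T. lra. }
    specialize (Hle Hl).
    assert (E : - (nu 0%nat * beta 0%nat) * - (s2 0%nat / g 0%nat * (y 0%nat * ln (y 0%nat) - y 0%nat + 1))
       = nu 0%nat * beta 0%nat * s2 0%nat / g 0%nat * (y 0%nat * ln (y 0%nat) - y 0%nat + 1)) by (field; lra).
    lra. }
  assert (Hlam_eq : forall n, (n < N)%nat -> lam n = lam 0%nat).
  { intros n Hn. destruct (Nat.eq_dec n 0) as [->|Hn0]; auto.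
    assert (H0 : (0 < N)%nat) by lia.
    destruct (Hpar n Hn) as (Hg&Hs&_&Hc&_&Hrm&_&Hb&Hnu).
    destruct (Hpar 0%nat H0) as (Hg0&Hs0&_&Hc0&_&Hrm0&_&Hb0&Hnu0).
    destruct (Huser n Hn) as (Hp&Hy&Epw&Eu&Ee).
    destruct (Huser 0%nat H0) as (Hp0&Hy0&Epw0&Eu0&Ee0).
    destruct (HpB n Hn) as [_ HBn]. destruct (HpB 0%nat H0) as [_ HB0].
    set (d := Rmin (B n) (B 0%nat)).
    assert (Hd : 0 < d /\ d <= B n /\ d <= B 0%nat) by (unfold d, Rmin; destruct Rle_dec; lra).
    assert (Hder := dlim_plus _ _ _ _ _
      (dlim_scal _ _ _ (-(nu n * beta n)) (d_pw_B (g n) (s2 n) (r n) (B n) Hg HBn))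
      (dlim_scal _ _ _ (-(nu 0%nat * beta 0%nat)) (d_pw_Bm (g 0%nat) (s2 0%nat) (r 0%nat) (B 0%nat) Hg0 HB0))).
    assert (Hh : forall tt, -d < tt < d ->
      -(nu n * beta n) * pw (g n) (s2 n) (r n) (B n + tt) + -(nu 0%nat * beta 0%nat) * pw (g 0%nat) (s2 0%nat) (r 0%nat) (B 0%nat - tt)
      <= -(nu n * beta n) * pw (g n) (s2 n) (r n) (B n + 0) + -(nu 0%nat * beta 0%nat) * pw (g 0%nat) (s2 0%nat) (r 0%nat) (B 0%nat - 0)).
    { intros tt Htt. rewrite Rplus_0_r, Rminus_0_r, <- Epw, <- Epw0.
      replace (B 0%nat - tt) with (B 0%nat + - tt) by ring.
      destruct (Hshift2 n tt Hn ltac:(lra)) as [Ha1 Ha2].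
      destruct (Hshift2 0%nat (-tt) H0 ltac:(lra)) as [Hb1 Hb2].
      assert (T := PP2 n 0%nat _ (B n + tt) _ (B 0%nat + - tt) _ _ Hn H0 Hn0 Ha1 ltac:(lra) Hb1 ltac:(lra) Ha2 Hb2
         ltac:(rewrite HsumEq; lra) (Hshift n tt Hn ltac:(lra)) (Hshift 0%nat (-tt) H0 ltac:(lra))).
      unfold t in T. lra. }
    assert (L1 := locmax_r _ _ d Hder (proj1 Hd) ltac:(intros; apply Hh; lra)).
    assert (L2 := locmax_l _ _ d Hder (proj1 Hd) ltac:(intros; apply Hh; lra)).
    rewrite dB_val with (y := y n) in L1, L2 by auto.
    rewrite dB_val with (y := y 0%nat) in L1, L2 by auto.
    assert (E1 : -(nu n * beta n) * - (s2 n / g n * (y n * ln (y n) - y n + 1)) = lam n) by (unfold lam; field; lra).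
    assert (E2 : -(nu 0%nat * beta 0%nat) * - - (s2 0%nat / g 0%nat * (y 0%nat * ln (y 0%nat) - y 0%nat + 1)) = - lam 0%nat)
      by (unfold lam; field; lra).
    rewrite E1, E2 in L1, L2. lra. }
  assert (Hrp : forall n s, (n < N)%nat -> rmin n <= r n + s -> 0 < r n - re n + s ->
    nu n * c n * f n (r n - re n + s) + -(nu n * beta n) * pw (g n) (s2 n) (r n + s) (B n)
    <= nu n * c n * F n + -(nu n * beta n) * p n).
  { intros n s Hn H1 H2. destruct (Hpar n Hn) as (Hg&Hs&_).
    destruct (HpB n Hn) as [_ HBn].
    assert (Hr0 : 0 <= r n + s) by (destruct (Hpar n Hn) as (_&_&_&_&Hre&_); lra).
    assert (T := PP1 n _ (B n) _ Hn (pw_nonneg _ _ _ _ Hg Hs HBn Hr0) HBn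
      ltac:(rewrite rate_pw; auto) ltac:(rewrite HsumEq; lra)
      ltac:(apply term_fin; rewrite rate_pw by auto; apply fext_pos; lra)).
    unfold t in T. replace (r n - re n + s) with (r n + s - re n) by ring. lra. }
  assert (HFpos : forall n, (n < N)%nat -> 0 < r n - re n -> F n = f n (r n - re n)).
  { intros n Hn H. assert (E := HFk n Hn). rewrite fext_pos in E by auto. injection E. auto. }
  assert (Hderf : forall n, (n < N)%nat -> 0 < r n - re n ->
    derivable_pt_lim (fun s => nu n * c n * f n (r n - re n + s) + -(nu n * beta n) * pw (g n) (s2 n) (r n + s) (B n)) 0
     (nu n * c n * Derive (f n) (r n - re n) + -(nu n * beta n) * (s2 n / g n * ln 2 * y n))).
  { intros n Hn H. destruct (Hpar n Hn) as (Hg&Hs&_). destruct (HpB n Hn) as [_ HBn].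
    destruct (Huser n Hn) as (_&_&_&_&Ee). rewrite <- Ee.
    apply dlim_plus; apply dlim_scal. apply d_shift. apply (Hf n Hn); auto. apply d_pw_r; auto. }
  assert (Hstat : forall n, (n < N)%nat -> rmin n < r n ->
    nu n * c n * Derive (f n) (r n - re n) + -(nu n * beta n) * (s2 n / g n * ln 2 * y n) = 0).
  { intros n Hn Hlt. destruct (Hpar n Hn) as (_&_&_&_&_&_&Hrr&_).
    assert (Hpos : 0 < r n - re n) by lra.
    assert (Hh : forall s, - (r n - rmin n) < s < r n - rmin n ->
      nu n * c n * f n (r n - re n + s) + -(nu n * beta n) * pw (g n) (s2 n) (r n + s) (B n)
      <= nu n * c n * f n (r n - re n + 0) + -(nu n * beta n) * pw (g n) (s2 n) (r n + 0) (B n)).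
    { intros s Hs. rewrite !Rplus_0_r, <- HFpos by auto. destruct (Huser n Hn) as (_&_&Epw&_).
      rewrite <- Epw. apply Hrp; auto; lra. }
    assert (L1 := locmax_r _ _ (r n - rmin n) (Hderf n Hn Hpos) ltac:(lra) ltac:(intros; apply Hh; lra)).
    assert (L2 := locmax_l _ _ (r n - rmin n) (Hderf n Hn Hpos) ltac:(lra) ltac:(intros; apply Hh; lra)).
    lra. }
  assert (Hact : forall n, (n < N)%nat -> r n = rmin n -> 0 < r n - re n ->
    nu n * c n * Derive (f n) (r n - re n) + -(nu n * beta n) * (s2 n / g n * ln 2 * y n) <= 0).
  { intros n Hn Heq Hpos.
    assert (Hh : forall s, 0 < s < 1 ->
      nu n * c n * f n (r n - re n + s) + -(nu n * beta n) * pw (g n) (s2 n) (r n + s) (B n)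
      <= nu n * c n * f n (r n - re n + 0) + -(nu n * beta n) * pw (g n) (s2 n) (r n + 0) (B n)).
    { intros s Hs. rewrite !Rplus_0_r, <- HFpos by auto. destruct (Huser n Hn) as (_&_&Epw&_).
      rewrite <- Epw. apply Hrp; auto; lra. }
    exact (locmax_r _ _ 1 (Hderf n Hn Hpos) ltac:(lra) Hh). }
  assert (Hpsi : forall n, (n < N)%nat -> psi (g n) (s2 n) (beta n) (nu n) (lam 0%nat) = y n - 1).
  { intros n Hn. rewrite <- (Hlam_eq n Hn). destruct (Hpar n Hn) as (Hg&Hs&_&_&_&_&_&Hb&Hnu).
    destruct (Huser n Hn) as (_&Hy&_). unfold lam. apply psi_eq; auto. }
  assert (Htg : forall n, (n < N)%nat ->
    nu n * c n * gamma_target (g n) (s2 n) (c n) (beta n) (y n - 1) = nu n * beta n * (s2 n / g n * ln 2 * y n)).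
  { intros n Hn. destruct (Hpar n Hn) as (Hg&Hs&_&Hc&_&_&_&Hb&Hnu). unfold gamma_target. field. lra. }
  assert (Hcorner : forall n, (n < N)%nat -> r n = re n ->
    (exists xi, 0 <= xi /\ deriv_value (f n) xi (gamma_target (g n) (s2 n) (c n) (beta n) (y n - 1))) ->
    deriv_value (f n) 0 (gamma_target (g n) (s2 n) (c n) (beta n) (y n - 1))).
  { intros n Hn Hre [xi [Hxi Hdv]].
    destruct Hdv as [[Hxp HD]|[Hx0 Hlim]]; [|subst xi; right; auto].
    right. split; auto.
    destruct (Hpar n Hn) as (Hg&Hs&_&Hc&_&Hrm&_&Hb&Hnu). destruct (HpB n Hn) as [_ HBn].
    destruct (Huser n Hn) as (_&_&Epw&_&Ee).
    assert (Hlim0 : filterlim (f n) (at_right 0) (locally (F n))).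
    { destruct (right_lim0_spec (f n) (Hinc n Hn)) as [Hl _].
      assert (E := HFk n Hn). replace (r n - re n) with 0 in E by lra.
      unfold fext in E. destruct (Rlt_dec 0 0); [lra|]. rewrite E in Hl. exact Hl. }
    assert (Hq := d_pw_r (g n) (s2 n) (r n) (B n) Hg HBn). rewrite Ee in Hq.
    assert (Etg : gamma_target (g n) (s2 n) (c n) (beta n) (y n - 1) =
        nu n * beta n * (s2 n / g n * ln 2 * y n) / (nu n * c n)).
    { rewrite <- Htg by auto. field. lra. }
    rewrite Etg in HD |- *.
    refine (corner (f n) (fun s => pw (g n) (s2 n) (r n + s) (B n)) (F n) (s2 n / g n * ln 2 * y n) xi
      (nu n * c n) (nu n * beta n) _ _ Hlim0 _ _ _ Hq Hxp HD).
    - intros x Hx. destruct (Hf n Hn x Hx) as [? [? _]]. auto.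
    - apply Hdec; auto.
    - nra.
    - nra.
    - intros s Hs0. assert (Hr := Hrt n Hn). fold (r n) in Hr. assert (T := Hrp n s Hn ltac:(lra) ltac:(lra)).
      replace (r n - re n + s) with s in T by lra. rewrite Rplus_0_r, <- Epw. lra. }
  pose (tg := fun n => gamma_target (g n) (s2 n) (c n) (beta n) (psi (g n) (s2 n) (beta n) (nu n) (lam 0%nat))).
  assert (Hgam : forall n, (n < N)%nat -> exists gm, is_gamma (f n) (re n) (tg n) gm /\ Rmax gm (rmin n) = r n).
  { intros n Hn. unfold tg. rewrite Hpsi by auto.
    destruct (Hpar n Hn) as (Hg&Hs&_&Hc&Hre&Hrm&Hrr&Hb&Hnu).
    assert (Hr := Hrt n Hn). fold (r n) in Hr.
    assert (HT := Htg n Hn).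
    set (T := gamma_target (g n) (s2 n) (c n) (beta n) (y n - 1)) in *.
    destruct (Rle_lt_or_eq_dec _ _ Hr) as [Hlt|Heq].
    - assert (HS := Hstat n Hn Hlt).
      exists (r n). split; [|apply Rmax_left; lra].
      left. exists (r n - re n). split; [lra|split; [|ring]]. left. split; [lra|].
      apply Rmult_eq_reg_l with (nu n * c n); [|nra]. lra.
    - destruct (Rle_lt_or_eq_dec _ _ Hrr) as [Hlt2|Heq2].
      + assert (Hpos : 0 < r n - re n) by lra.
        assert (HA := Hact n Hn (eq_sym Heq) Hpos).
        assert (HDle : Derive (f n) (r n - re n) <= T).
        { apply Rmult_le_reg_l with (nu n * c n); [nra|]. lra. }
        destruct (Req_dec (Derive (f n) (r n - re n)) T) as [HDe|HDne].
        * exists (r n). split; [|apply Rmax_left; lra].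
          left. exists (r n - re n). split; [lra|split; [|ring]]. left. split; [lra|auto].
        * destruct (classic (exists xi, 0 <= xi /\ deriv_value (f n) xi T)) as [[xi [Hxi Hdv]]|Hno].
          -- exists (re n + xi). split. left. exists xi. split; [auto|split; [auto|ring]].
             rewrite Heq; apply Rmax_right. destruct Hdv as [[Hxp HD]|[Hx0 _]]; [|lra].
             apply Rnot_lt_le. intro Hc'.
             assert (Derive (f n) xi <= Derive (f n) (r n - re n)) by (apply Hdec; auto; lra). lra.
          -- exists (re n). split. right. split; [exact Hno|reflexivity]. rewrite Heq; apply Rmax_right. lra.
      + destruct (classic (exists xi, 0 <= xi /\ deriv_value (f n) xi T)) as [Hex|Hno].
        * exists (re n). split. left. exists 0. split; [lra|split; [|ring]].
          apply Hcorner; auto. lra. rewrite Heq; apply Rmax_right. lra.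
        * exists (re n). split. right. split; [exact Hno|reflexivity]. rewrite Heq; apply Rmax_right. lra. }
  pose (gam := fun n => epsilon (inhabits 0) (fun gm => is_gamma (f n) (re n) (tg n) gm /\ Rmax gm (rmin n) = r n)).
  assert (Hgam' : forall n, (n < N)%nat -> is_gamma (f n) (re n) (tg n) (gam n) /\ Rmax (gam n) (rmin n) = r n).
  { intros n Hn. unfold gam. apply epsilon_spec. apply Hgam; auto. }
  assert (HBc : forall n, (n < N)%nat -> Bcal (gam n) (rmin n) (psi (g n) (s2 n) (beta n) (nu n) (lam 0%nat)) = B n).
  { intros n Hn. unfold Bcal. rewrite (proj2 (Hgam' n Hn)), Hpsi by auto.
    destruct (Huser n Hn) as (_&Hy&_). destruct (HpB n Hn) as [_ HBn].
    replace (1 + (y n - 1)) with (y n) by ring.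
    assert (Hl : 0 < ln (y n)) by (rewrite <- ln_1; apply ln_increasing; lra).
    unfold r, rate, log2. fold (y n). field. repeat split; apply Rgt_not_eq; lra. }
  exists (lam 0%nat). split. apply Hlam; lia.
  exists gam. split; [|split].
  - intros n Hn. apply Hgam'; auto.
  - rewrite (rsum_ext N _ B HBc). auto.
  - intros n Hn. split. symmetry. apply HBc; auto.
    rewrite Hpsi by auto. destruct (Hpar n Hn) as (Hg&Hs&_). destruct (HpB n Hn) as [_ HBn].
    unfold y. field. repeat split; apply Rgt_not_eq; lra.
Qed.
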